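(* For every nonzero integer $n$, \[\left\lfloor\frac{1}{e^{\sqrt2/n}-1}\right\rfloor=\left\lfloor\frac{n}{\sqrt2}-\frac12\right\rfloor.\]
   Context: $\lfloor x\rfloor$ denotes the floor of $x$. *)

(* Defs.v *)
From Stdlib Require Import Reals ZArith.
Open Scope R_scope.

(* floor function: Stdlib's Int_part x = up x - 1 is the greatest integer <= x *)
Definition Rfloor (x : R) : Z := Int_part x.

(* Main.v *)
Require Import Defs.
From Stdlib Require Import Reals Lra Lia Psatz ZArith.
From Coquelicot Require Import Coquelicot.
Open Scope R_scope.

Lemma ineqA (y : R) : 0 < y -> (2 - y) * exp y < 2 + y.
Proof.
intros hy.
pose (G := fun t => (2+t)*exp(-t) + t - 2).
destruct (MVT_cor2 G (fun t => 1 - (1+t)*exp(-t)) 0 y hy) as [c [Hc Hc2]].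
{ intros c _. apply is_derive_Reals. unfold G. auto_derive; auto. ring. }
assert (H0 : G 0 = 0) by (unfold G; rewrite Ropp_0, exp_0; ring).
assert (Hpos : 0 < 1 - (1+c)*exp(-c)).
{ rewrite exp_Ropp. assert (1 + c < exp c) by (apply exp_ineq1; lra).
  assert (0 < exp c) by apply exp_pos.
  assert ((1+c) * / exp c < 1); [|lra].
  apply (Rmult_lt_reg_r (exp c)); auto.
  rewrite Rmult_assoc, Rinv_l by lra. lra. }
assert (HGy : 0 < G y) by nra.
unfold G in HGy. rewrite exp_Ropp in HGy.
assert (Hey : 0 < exp y) by apply exp_pos.
assert (Heq : ((2+y) * / exp y) * exp y = 2 + y) by (field; lra).
nra.
Qed.

Lemma ineqB (y : R) : 0 < y ->
  12 + 6*y + y*y < (12 - 6*y + y*y) * exp y.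
Proof.
intros hy.
pose (EE := fun t => exp(-t) * (12 + 6*t + t*t) / (12 - 6*t + t*t)).
assert (HQ : forall t, 0 < 12 - 6*t + t*t) by (intros t; assert (0 <= (t-3)*(t-3)) by apply Rle_0_sqr; lra).
destruct (MVT_cor2 EE (fun t => - exp(-t) * (t*t*t*t) / ((12 - 6*t + t*t)^2)) 0 y hy) as [c [Hc Hc2]].
{ intros c _. apply is_derive_Reals. unfold EE. auto_derive.
  - specialize (HQ c). lra.
  - field. specialize (HQ c). lra. }
assert (H0 : EE 0 = 1) by (unfold EE; rewrite Ropp_0, exp_0; field).
assert (Hneg : - exp(-c) * (c*c*c*c) / ((12 - 6*c + c*c)^2) < 0).
{ assert (0 < exp (-c)) by apply exp_pos.
  assert (0 < c*c*c*c) by (assert (0 < c*c) by nra; nra).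
  assert (0 < (12 - 6*c + c*c)^2) by (specialize (HQ c); nra).
  unfold Rdiv. assert (0 < / (12 - 6*c + c*c)^2) by (apply Rinv_0_lt_compat; auto).
  assert (0 < exp (-c) * (c*c*c*c) * / (12 - 6*c + c*c)^2) by (apply Rmult_lt_0_compat; [apply Rmult_lt_0_compat|]; auto). lra. }
assert (HEy : EE y < 1) by nra.
unfold EE in HEy. rewrite exp_Ropp in HEy.
assert (Hey : 0 < exp y) by apply exp_pos.
specialize (HQ y).
assert (Heq : / exp y * (12 + 6*y + y*y) / (12 - 6*y + y*y)
   = (12 + 6*y + y*y) / (exp y * (12 - 6*y + y*y))) by (field; lra).
rewrite Heq in HEy.
assert (Hp : 0 < exp y * (12 - 6*y + y*y)) by nra.
assert (Heq2 : 12 + 6*y + y*y = (12 + 6*y + y*y) / (exp y * (12 - 6*y + y*y)) * (exp y * (12 - 6*y + y*y))) by (field; lra).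
rewrite Heq2. rewrite (Rmult_comm (12 - 6*y + y*y)). 
apply Rmult_lt_compat_r with (r := exp y * (12 - 6*y + y*y)) in HEy; lra.
Qed.

Lemma bounds (y : R) : 0 < y ->
  1/y - 1/2 < 1 / (exp y - 1) < 1/y - 1/2 + y/12.
Proof.
intros hy.
assert (HE : 1 + y < exp y) by (apply exp_ineq1; lra).
remember (exp y) as E eqn:HEd in *.
assert (HA := ineqA y hy). assert (HB := ineqB y hy). rewrite <- HEd in HA, HB.
assert (HL : 1/(E-1) * (E-1) = 1) by (field; lra).
remember (1/(E-1)) as L eqn:HLd in *.
assert (Hb : (1/y - 1/2) * y = 1 - y/2) by (field; lra).
remember (1/y - 1/2) as b eqn:Hbd in *.
assert (Hc : (b + y/12) * y = 1 - y/2 + y*y/12) by lra.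
assert (HLy : L*y*(E-1) = y) by (rewrite Rmult_assoc, (Rmult_comm y), <- Rmult_assoc, HL; ring).
split.
- destruct (Rlt_or_le b L) as [h|h]; auto. exfalso.
  assert (b*y*(E-1) >= L*y*(E-1)) by (apply Rle_ge; apply Rmult_le_compat_r; [lra|];
     apply Rmult_le_compat_r; lra).
  rewrite Hb, HLy in H. nra.
- destruct (Rlt_or_le L (b + y/12)) as [h|h]; auto. exfalso.
  assert ((b + y/12)*y*(E-1) <= L*y*(E-1)) by (apply Rmult_le_compat_r; [lra|];
     apply Rmult_le_compat_r; lra).
  rewrite Hc, HLy in H. nra.
Qed.

Lemma s2 : sqrt 2 * sqrt 2 = 2.
Proof. apply sqrt_sqrt; lra. Qed.
Lemma s2pos : 0 < sqrt 2.
Proof. apply sqrt_lt_R0; lra. Qed.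
Lemma inv_s2 : / sqrt 2 = sqrt 2 / 2.
Proof. assert (H := s2). assert (H2 := s2pos).
apply Rmult_eq_reg_l with (sqrt 2); [|lra]. rewrite Rinv_r by lra. lra. Qed.

Lemma no_close (m p : Z) : (1 <= p)%Z ->
  0 < IZR m - IZR p * sqrt 2 < sqrt 2 / (6 * IZR p) -> False.
Proof.
intros hp [h1 h2].
assert (HP : 1 <= IZR p) by (apply IZR_le; lia).
assert (S2 := s2). assert (Sp := s2pos).
remember (sqrt 2) as s eqn:Hsd in *.
remember (IZR m - IZR p * s) as t eqn:Htd in *.
assert (htP : t * IZR p < s/6).
{ apply Rmult_lt_compat_r with (r := IZR p) in h2; [|lra].
  replace (s / (6 * IZR p) * IZR p) with (s/6) in h2 by (field; lra). lra. }
assert (ht : t < s/6) by nra.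
assert (HD : IZR (m*m - 2*p*p) = t*t + 2*(t*IZR p)*s).
{ rewrite minus_IZR, !mult_IZR. rewrite Htd. replace (IZR 2) with 2 by reflexivity. nra. }
assert (D1 : 0 < IZR (m*m - 2*p*p)) by (rewrite HD; nra).
assert (D2 : IZR (m*m - 2*p*p) < 1).
{ rewrite HD. assert (t*t < s/6*(s/6)) by nra. nra. }
apply lt_IZR in D1. apply lt_IZR in D2. lia.
Qed.

Lemma floor_unique (x : R) (k : Z) : IZR k <= x < IZR k + 1 -> Int_part x = k.
Proof.
intros [h1 h2]. unfold Int_part.
assert (k + 1 = up x)%Z.
{ apply tech_up; rewrite plus_IZR; simpl; lra. }
lia.
Qed.

Theorem mainTheorem14 (n : Z) (hn : n <> 0%Z) :
  Rfloor (1 / (exp (sqrt 2 / IZR n) - 1)) = Rfloor (IZR n / sqrt 2 - 1 / 2).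
Proof.
assert (S2 := s2). assert (Sp := s2pos).
remember (IZR n / sqrt 2 - 1/2) as a eqn:Ead.
assert (Ha := base_Int_part a).
remember (Int_part a) as k eqn:Ek in Ha. unfold Rfloor. rewrite <- Ek.
apply floor_unique.
destruct (Z_lt_le_dec 0 n) as [Hpos|Hneg].
- assert (HN : 1 <= IZR n) by (apply IZR_le; lia).
  remember (sqrt 2 / IZR n) as y eqn:Ey.
  assert (hy : 0 < y) by (rewrite Ey; apply Rdiv_lt_0_compat; lra).
  destruct (bounds y hy) as [b1 b2].
  assert (Hay : 1/y - 1/2 = a) by (rewrite Ead, Ey; field; lra).
  rewrite Hay in b1, b2.
  split; [lra|].
  destruct (Rlt_or_le (1 / (exp y - 1)) (IZR k + 1)) as [h|h]; auto.
  exfalso. apply (no_close (2*k+3) n); [lia|].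
  rewrite plus_IZR, mult_IZR.
  assert (H2a : 2*a = IZR n * sqrt 2 - 1) by (rewrite Ead; unfold Rdiv; rewrite inv_s2; lra).
  assert (Hy6 : sqrt 2 / (6 * IZR n) = y/6) by (rewrite Ey; field; lra).
  rewrite Hy6. simpl (IZR 2); simpl (IZR 3). lra.
- assert (Hn : (n < 0)%Z) by lia.
  remember (- n)%Z as p eqn:Epd.
  assert (HP : 1 <= IZR p) by (apply IZR_le; rewrite Epd; lia).
  assert (Hnp : IZR n = - IZR p) by (rewrite Epd; rewrite opp_IZR; ring).
  remember (sqrt 2 / IZR p) as y eqn:Ey.
  assert (hy : 0 < y) by (rewrite Ey; apply Rdiv_lt_0_compat; lra).
  destruct (bounds y hy) as [b1 b2].
  assert (Hx : sqrt 2 / IZR n = - y) by (rewrite Ey; rewrite Hnp; field; lra).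
  rewrite Hx.
  assert (HE : 1 + y < exp y) by (apply exp_ineq1; lra).
  assert (HL : 1 / (exp (-y) - 1) = -1 - 1 / (exp y - 1)).
  { rewrite exp_Ropp. field. split; lra. }
  rewrite HL.
  assert (Hay : -(1/y) - 1/2 = a) by (rewrite Ead, Ey; rewrite Hnp; field; lra).
  assert (H2a : 2*a = - IZR p * sqrt 2 - 1) by (rewrite Ead, Hnp; unfold Rdiv; rewrite inv_s2; lra).
  assert (Hy6 : sqrt 2 / (6 * IZR p) = y/6) by (rewrite Ey; field; lra).
  split; [|lra].
  destruct (Rle_or_lt (IZR k) (-1 - 1 / (exp y - 1))) as [h|h]; auto.
  exfalso.
  destruct (Req_dec (IZR k) a) as [Hk|Hk].
  + assert (Hsq : IZR ((2*k+1)*(2*k+1)) = IZR (2*p*p)).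
    { rewrite !mult_IZR, plus_IZR, mult_IZR. simpl (IZR 2); simpl (IZR 1).
      assert (2*IZR k + 1 = - IZR p * sqrt 2) by lra.
      rewrite H. nra. }
    apply eq_IZR in Hsq. nia.
  + apply (no_close (-(2*k+1)) p); [lia|].
    rewrite opp_IZR, plus_IZR, mult_IZR. rewrite Hy6. simpl (IZR 2); simpl (IZR 1). lra.
Qed.
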